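(* Let $\Gamma$ be a geometry of type $C_3$. Then every closed path of $\Gamma$ based at a point is homotopic to a primitive path.
   Context: A geometry of type $C_3$ is a (residually connected) rank-3 Tits geometry belonging to the diagram $\circ\!-\!\circ\!=\!\circ$, with types $1,2,3$ called points, lines and planes respectively (residue of a plane: a projective plane on its points and lines; residue of a point: a generalized quadrangle on its lines and planes; residue of a line: a generalized digon). Paths and homotopy: a path is a sequence of elements with consecutive elements incident; homotopy $\sim$ is the equivalence relation on paths with fixed endpoints generated by $(x,y,x)\leftrightarrow(x)$ and $(x,y,z)\leftrightarrow(x,z)$ for flags $\{x,y,z\}$ (homotopy in the flag complex). A primitive path is a closed path $(p,L,q,M,p)$ with $p,q$ points and $L,M$ lines; it is degenerate if $p=q$ or $L=M$. *)

(* Defs.v *)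
From Stdlib Require Import List Relations.
Import ListNotations.
Set Implicit Arguments.

(** Types 1,2,3 = points, lines, planes. *)
Inductive ctype : Type := Pt | Ln | Pl.

Section Geometry.
Variables (X : Type) (t : X -> ctype) (I : X -> X -> Prop).

Definition incidence_system : Prop :=
  (forall x, I x x) /\ (forall x y, I x y -> I y x) /\
  (forall x y, I x y -> t x = t y -> x = y).

Definition is_flag (F : X -> Prop) : Prop := forall x y, F x -> F y -> I x y.

Definition missing_type (F : X -> Prop) (T : ctype) : Prop :=
  ~ (exists x, F x /\ t x = T).

Definition residue (F : X -> Prop) (y : X) : Prop :=
  (forall x, F x -> I x y) /\ (forall x, F x -> t x <> t y).

Definition connected (R : X -> Prop) : Prop :=
  (exists x, R x) /\
  forall x y, R x -> R y ->
    clos_refl_trans X (fun a b => R a /\ R b /\ I a b) x y.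

Definition every_flag_in_chamber : Prop :=
  forall F, is_flag F -> exists C, is_flag C /\ (forall x, F x -> C x) /\
    forall T, exists x, C x /\ t x = T.

Definition residually_connected : Prop :=
  (forall F, is_flag F ->
     (exists T1 T2, T1 <> T2 /\ missing_type F T1 /\ missing_type F T2) ->
     connected (residue F)) /\
  (forall F, is_flag F ->
     (exists T, missing_type F T /\ forall T', T' <> T -> ~ missing_type F T') ->
     exists y, residue F y).

Definition projective_plane (P L : X -> Prop) : Prop :=
  (forall p q, P p -> P q -> p <> q ->
     exists l, L l /\ I p l /\ I q l /\
       forall l', L l' -> I p l' -> I q l' -> l' = l) /\
  (forall l m, L l -> L m -> l <> m ->
     exists p, P p /\ I p l /\ I p m /\
       forall p', P p' -> I p' l -> I p' m -> p' = p) /\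
  (exists a b c d, P a /\ P b /\ P c /\ P d /\
     a <> b /\ a <> c /\ a <> d /\ b <> c /\ b <> d /\ c <> d /\
     (forall l, L l -> ~ (I a l /\ I b l /\ I c l)) /\
     (forall l, L l -> ~ (I a l /\ I b l /\ I d l)) /\
     (forall l, L l -> ~ (I a l /\ I c l /\ I d l)) /\
     (forall l, L l -> ~ (I b l /\ I c l /\ I d l))).

(** Generalized quadrangle (Payne-Thas, orders s,t >= 1, possibly infinite)
    with point set P, line set L, incidence I. *)
Definition gen_quadrangle (P L : X -> Prop) : Prop :=
  (forall x y W W', P x -> P y -> x <> y -> L W -> L W' ->
     I x W -> I y W -> I x W' -> I y W' -> W = W') /\
  (forall x Y, P x -> L Y -> ~ I x Y ->
     exists z, P z /\ I z Y /\ (exists W, L W /\ I x W /\ I z W) /\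
       forall z', P z' -> I z' Y -> (exists W, L W /\ I x W /\ I z' W) -> z' = z) /\
  (forall x, P x -> exists W1 W2, L W1 /\ L W2 /\ W1 <> W2 /\ I x W1 /\ I x W2) /\
  (forall W, L W -> exists x y, P x /\ P y /\ x <> y /\ I x W /\ I y W).

Definition gen_digon (P L : X -> Prop) : Prop :=
  forall x y, P x -> L y -> I x y.

Definition of_type_in (T : ctype) (z : X) (y : X) : Prop := t y = T /\ I y z.

Definition C3_geometry : Prop :=
  incidence_system /\ every_flag_in_chamber /\ residually_connected /\
  (forall z, t z = Pl -> projective_plane (of_type_in Pt z) (of_type_in Ln z)) /\
  (forall z, t z = Pt -> gen_quadrangle (of_type_in Ln z) (of_type_in Pl z)) /\
  (forall z, t z = Ln -> gen_digon (of_type_in Pt z) (of_type_in Pl z)).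

Fixpoint chain (x : X) (l : list X) : Prop :=
  match l with
  | [] => True
  | y :: l' => I x y /\ chain y l'
  end.

Definition is_path (l : list X) : Prop :=
  match l with
  | [] => False
  | x :: l' => chain x l'
  end.

Definition elem_move (l1 l2 : list X) : Prop :=
  (exists a b x y, l1 = a ++ [x; y; x] ++ b /\ l2 = a ++ [x] ++ b) \/
  (exists a b x y z, I x y /\ I y z /\ I x z /\
     l1 = a ++ [x; y; z] ++ b /\ l2 = a ++ [x; z] ++ b).

Definition path_move (l1 l2 : list X) : Prop :=
  is_path l1 /\ is_path l2 /\ elem_move l1 l2.

Definition homotopic (l1 l2 : list X) : Prop :=
  clos_refl_sym_trans (list X) path_move l1 l2.

Definition closed_path_at (p : X) (l : list X) : Prop :=
  is_path l /\ hd_error l = Some p /\ last l p = p.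

Definition primitive_path (l : list X) : Prop :=
  exists p L q M, l = [p; L; q; M; p] /\
    t p = Pt /\ t q = Pt /\ t L = Ln /\ t M = Ln /\ is_path l.

End Geometry.

(* Main.v *)
Require Import Defs.
From Stdlib Require Import List Relations Classical.
Import ListNotations.

Lemma last_cons_d {A} (l : list A) x d : last (x :: l) d = last l x.
Proof.
  revert x d. induction l as [|y l IH]; intros x d; [reflexivity|].
  change (last (y :: l) d = last (y :: l) x). rewrite !IH. reflexivity.
Qed.

Lemma chain_app {X} {I : X -> X -> Prop} l1 l2 x :
  chain I x (l1 ++ l2) <-> chain I x l1 /\ chain I (last l1 x) l2.
Proof.
  revert x. induction l1 as [|y l1 IH]; intros x; simpl.
  - tauto.
  - rewrite IH. rewrite <- (last_cons_d l1 y x). simpl. tauto.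
Qed.

Lemma path_mid {X} {I : X -> X -> Prop} a x l b :
  is_path I (a ++ (x :: l) ++ b) <->
  is_path I (a ++ [x]) /\ chain I x l /\ chain I (last l x) b.
Proof.
  destruct a as [|w a]; simpl.
  - rewrite chain_app. tauto.
  - rewrite !chain_app. simpl. rewrite chain_app. tauto.
Qed.

Lemma elem_move_ctx {X} {I : X -> X -> Prop} {l1 l2} a b :
  elem_move I l1 l2 -> elem_move I (a ++ l1 ++ b) (a ++ l2 ++ b).
Proof.
  intros [(a'&b'&x&y&E1&E2)|(a'&b'&x&y&z&H1&H2&H3&E1&E2)]; subst.
  - left. exists (a ++ a'), (b' ++ b), x, y. split; rewrite <- !app_assoc; reflexivity.
  - right. exists (a ++ a'), (b' ++ b), x, y, z. repeat split; auto;
    rewrite <- !app_assoc; reflexivity.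
Qed.

Lemma last_app_gen {A} (l b : list A) d : last (l ++ b) d = last b (last l d).
Proof.
  revert d. induction l as [|x l IH]; intros d; [reflexivity|].
  rewrite <- app_comm_cons, !last_cons_d. apply IH.
Qed.

Lemma last_ne {A} (m : list A) d d' : m <> [] -> last m d = last m d'.
Proof.
  induction m as [|x m IH]; intros H; [congruence|].
  destruct m; simpl; auto. apply IH. discriminate.
Qed.

Lemma elem_move_ends {X} {I : X -> X -> Prop} {l1 l2} :
  elem_move I l1 l2 -> exists h m1 m2, l1 = h :: m1 /\ l2 = h :: m2 /\
    forall d, last l1 d = last l2 d.
Proof.
  intros [(a'&b'&x&y&E1&E2)|(a'&b'&x&y&z&H1&H2&H3&E1&E2)]; subst.
  - destruct a' as [|w a'].
    + exists x, ([y;x] ++ b'), b'. split; [reflexivity|split; [reflexivity|intros d]].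
      rewrite !last_app_gen. reflexivity.
    + exists w, (a' ++ [x;y;x] ++ b'), (a' ++ [x] ++ b'). split; [reflexivity|split; [reflexivity|intros d]].
      rewrite !last_app_gen. reflexivity.
  - destruct a' as [|w a'].
    + exists x, ([y;z] ++ b'), ([z] ++ b'). split; [reflexivity|split; [reflexivity|intros d]].
      rewrite !last_app_gen. reflexivity.
    + exists w, (a' ++ [x;y;z] ++ b'), (a' ++ [x;z] ++ b'). split; [reflexivity|split; [reflexivity|intros d]].
      rewrite !last_app_gen. reflexivity.
Qed.

Lemma path_move_iff {X} {I : X -> X -> Prop} {l1 l2} a b :
  path_move I l1 l2 -> (is_path I (a ++ l1 ++ b) <-> is_path I (a ++ l2 ++ b)).
Proof.
  intros (P1 & P2 & M).
  destruct (elem_move_ends M) as (h & m1 & m2 & E1 & E2 & L). subst.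
  specialize (L h). rewrite !last_cons_d in L.
  simpl in P1, P2.
  rewrite !path_mid. rewrite L. tauto.
Qed.

Lemma hcong {X} {I : X -> X -> Prop} {l1 l2} :
  homotopic I l1 l2 -> forall a b,
  (is_path I (a ++ l1 ++ b) <-> is_path I (a ++ l2 ++ b)) /\
  (is_path I (a ++ l1 ++ b) -> homotopic I (a ++ l1 ++ b) (a ++ l2 ++ b)).
Proof.
  induction 1 as [l1 l2 H| l | l1 l2 H IH | l1 l2 l3 H1 IH1 H2 IH2]; intros a b.
  - split. apply path_move_iff; auto.
    intros P. apply rst_step. destruct H as (P1&P2&M). split; [|split]; auto.
    apply (path_move_iff a b (conj P1 (conj P2 M))); auto.
    apply elem_move_ctx; auto.
  - split. tauto. intros; apply rst_refl.
  - destruct (IH a b) as [E F]. split. tauto. intros P. apply rst_sym. apply F. tauto.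
  - destruct (IH1 a b) as [E1 F1]. destruct (IH2 a b) as [E2 F2]. split. tauto.
    intros P. eapply rst_trans. apply F1; auto. apply F2. tauto.
Qed.

Lemma cong {X} {I : X -> X -> Prop} {l1 l2} a b :
  homotopic I l1 l2 -> is_path I (a ++ l1 ++ b) ->
  homotopic I (a ++ l1 ++ b) (a ++ l2 ++ b).
Proof. intros H P. apply (hcong H a b); auto. Qed.

Lemma congL {X} {I : X -> X -> Prop} {l1 l2} a :
  homotopic I l1 l2 -> is_path I (a ++ l1) ->
  homotopic I (a ++ l1) (a ++ l2).
Proof. intros H P. rewrite <- (app_nil_r l1), <- (app_nil_r l2).
  apply cong; auto. rewrite app_nil_r; auto. Qed.

Lemma hmv1 {X} {I : X -> X -> Prop} {l1 l2} a b x y :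
  l1 = a ++ [x;y;x] ++ b -> l2 = a ++ [x] ++ b -> is_path I l1 -> is_path I l2 ->
  homotopic I l1 l2.
Proof.
  intros E1 E2 P1 P2. apply rst_step. split; [|split]; auto. left. eauto 7.
Qed.

Lemma hmv2 {X} {I : X -> X -> Prop} {l1 l2} a b x y z :
  l1 = a ++ [x;y;z] ++ b -> l2 = a ++ [x;z] ++ b ->
  I x y -> I y z -> I x z ->
  is_path I l1 -> is_path I l2 ->
  homotopic I l1 l2.
Proof.
  intros E1 E2 H1 H2 H3 P1 P2. apply rst_step. split; [|split]; auto. right. eauto 10.
Qed.

Lemma htrans {X} {I : X -> X -> Prop} {l1 l2 l3} :
  homotopic I l1 l2 -> homotopic I l2 l3 -> homotopic I l1 l3.
Proof. apply rst_trans. Qed.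

Lemma hsym {X} {I : X -> X -> Prop} {l1 l2} :
  homotopic I l1 l2 -> homotopic I l2 l1.
Proof. apply rst_sym. Qed.

Lemma last_in {A} (l : list A) d : l <> [] -> In (last l d) l.
Proof.
  induction l as [|x l IH]; intros H; [congruence|].
  destruct l as [|y l]; simpl; auto. right. apply IH. discriminate.
Qed.

Lemma cone {X} {I : X -> X -> Prop} (Hsym : forall x y, I x y -> I y x) z :
  forall l x, I x z -> (forall y, In y l -> I y z) -> chain I x l ->
  homotopic I (x :: l) [x; z; last l x].
Proof.
  induction l as [|y l IH]; intros x Hx Hl C.
  - simpl. apply hsym. eapply (hmv1 [] [] x z); simpl; eauto.
  - destruct C as [Cxy C].
    assert (Hy : I y z) by (apply Hl; left; auto).
    assert (IH' := IH y Hy (fun u h => Hl u (or_intror h)) C).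
    rewrite last_cons_d.
    eapply htrans.
    + apply (congL [x] IH'). simpl. auto.
    + assert (Hw : I (last l y) z).
      { destruct l as [|u l']. simpl; auto.
        apply Hl. right. apply last_in. discriminate. }
      simpl. eapply (hmv2 [] [last l y] x y z); simpl; eauto.
Qed.


Lemma cone_eq {X} {I : X -> X -> Prop} (Hsym : forall x y, I x y -> I y x) z x m1 m2 :
  I x z -> (forall y, In y m1 -> I y z) -> (forall y, In y m2 -> I y z) ->
  chain I x m1 -> chain I x m2 -> last m1 x = last m2 x ->
  homotopic I (x :: m1) (x :: m2).
Proof.
  intros Hx H1 H2 C1 C2 E.
  eapply htrans. apply (cone Hsym z m1 x); auto.
  rewrite E. apply hsym. apply (cone Hsym z m2 x); auto.
Qed.

Lemma ctype3 (a b c d : ctype) : a <> b -> c <> a -> c <> b -> d <> a -> d <> b -> d = c.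
Proof. destruct a, b, c, d; congruence. Qed.

Lemma third {X} {t : X -> ctype} {I : X -> X -> Prop} (HG : C3_geometry t I) x y T :
  I x y -> t x <> t y -> T <> t x -> T <> t y -> exists z, t z = T /\ I x z /\ I y z.
Proof.
  intros Hxy Dxy D1 D2.
  destruct HG as ((Hr&Hs&Ht)&_&(_&R2)&_).
  destruct (R2 (fun u => u = x \/ u = y)) as (z & Hz1 & Hz2).
  - intros a b [ -> | -> ] [ -> | -> ]; auto.
  - exists T. split.
    + intros (u & [ -> | -> ] & E); congruence.
    + intros T' HT' Hm. apply Hm.
      destruct (classic (T' = t x)) as [E|E]. exists x; auto.
      destruct (classic (T' = t y)) as [E'|E']. exists y; auto.
      exfalso. apply HT'. eapply ctype3; [exact Dxy| | |exact E|exact E']; auto.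
  - exists z. split; [|split]; auto.
    assert (A1 := Hz2 x (or_introl eq_refl)). assert (A2 := Hz2 y (or_intror eq_refl)).
    apply (ctype3 (t x) (t y)); auto.
Qed.

Lemma line_through {X} {t : X -> ctype} {I : X -> X -> Prop} (HG : C3_geometry t I) f :
  t f = Pt -> exists K, t K = Ln /\ I f K.
Proof.
  intros Tf. pose proof HG as HG'.
  destruct HG as ((Hr&Hs&Ht)&_&(R1&_)&_).
  destruct (R1 (fun u => u = f)) as ((z & Hz1 & Hz2) & _).
  - intros a b -> ->; auto.
  - exists Ln, Pl. split; [discriminate|split]; intros (u & -> & E); congruence.
  - specialize (Hz1 f eq_refl). specialize (Hz2 f eq_refl).
    destruct (t z) eqn:Tz.
    + congruence.
    + exists z; auto.
    + destruct (third HG' f z Ln Hz1) as (K & TK & H1 & H2); try congruence.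
      exists K; auto.
Qed.

Lemma join_in_plane {X} {t : X -> ctype} {I : X -> X -> Prop} (HG : C3_geometry t I) pi x y :
  t pi = Pl -> t x = Pt -> t y = Pt -> I x pi -> I y pi ->
  exists N, t N = Ln /\ I x N /\ I y N /\ I N pi.
Proof.
  intros Tp Tx Ty Hx Hy. pose proof HG as HG'.
  destruct HG as ((Hr&Hs&Ht)&_&_&PP&_).
  destruct (classic (x = y)) as [<-|Nxy].
  - destruct (third HG' x pi Ln Hx) as (N & TN & H1 & H2); try congruence.
    exists N; auto.
  - destruct (PP pi Tp) as (A1 & _).
    destruct (A1 x y (conj Tx Hx) (conj Ty Hy) Nxy) as (N & (TN & HN) & H1 & H2 & _).
    exists N; auto.
Qed.

Ltac inall := let u := fresh "u" in let Hu := fresh "Hu" in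
  intros u Hu; simpl in Hu;
  repeat (destruct Hu as [Hu|Hu]; [subst u|]); try contradiction.

Ltac pth Hs Hr := unfold is_path; simpl; repeat split; first [assumption | apply Hs; assumption | apply Hr].

Lemma stepA {X} {t : X -> ctype} {I : X -> X -> Prop} (HG : C3_geometry t I) f v w :
  t f = Pt -> I f v -> I v w ->
  exists K f', t K = Ln /\ t f' = Pt /\ chain I f [K; f'; w] /\
    homotopic I [f; v; w] [f; K; f'; w].
Proof.
  intros Tf Hfv Hvw. pose proof HG as HG'.
  destruct HG as ((Hr&Hs&Ht)&_&_&PP&GQ&DG).
  destruct (classic (I f w)) as [Hfw|Nfw].
  - destruct (line_through HG' f Tf) as (K & TK & HK).
    exists K, f. split; [|split; [|split]]; auto.
    + pth Hs Hr.
    + eapply htrans. eapply (hmv2 [] [] f v w); pth Hs Hr.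
      apply hsym. eapply (hmv1 [] [w] f K); pth Hs Hr.
  - destruct (t v) eqn:Tv.
    + exfalso. assert (f = v) by (apply Ht; congruence). subst; auto.
    + destruct (t w) eqn:Tw.
      * exists v, w. split; [|split; [|split]]; auto.
        pth Hs Hr.
        apply hsym. eapply (hmv2 [f] [] v w w); pth Hs Hr.
      * exfalso. assert (v = w) by (apply Ht; congruence). subst; auto.
      * exfalso. apply Nfw. apply (DG v Tv f w); split; auto.
    + assert (exists f', t f' = Pt /\ I f' w /\ I f' v) as (f' & Tf' & H1 & H2).
      { destruct (t w) eqn:Tw.
        - exists w; repeat split; auto.
        - destruct (third HG' w v Pt) as (z & Tz & Hz1 & Hz2); try congruence; auto.
          exists z; repeat split; auto.
        - exfalso. assert (v = w) by (apply Ht; congruence). subst; auto. }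
      destruct (join_in_plane HG' v f f' Tv Tf Tf' Hfv H2) as (K & TK & K1 & K2 & K3).
      exists K, f'. split; [|split; [|split]]; auto.
      -- pth Hs Hr.
      -- apply (cone_eq Hs v); auto.
        * inall; auto.
        * inall; auto.
        * simpl; auto.
        * simpl; auto.
Qed.


Lemma reduce3 {X} {t : X -> ctype} {I : X -> X -> Prop} (HG : C3_geometry t I)
  a L1 b L2 c L3 d :
  t a = Pt -> t b = Pt -> t c = Pt -> t d = Pt -> t L1 = Ln -> t L2 = Ln -> t L3 = Ln ->
  chain I a [L1; b; L2; c; L3; d] ->
  exists Xl e Y, t Xl = Ln /\ t e = Pt /\ t Y = Ln /\ chain I a [Xl; e; Y; d] /\
    homotopic I [a; L1; b; L2; c; L3; d] [a; Xl; e; Y; d].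
Proof.
  intros Ta Tb Tc Td T1 T2 T3 Ch. pose proof HG as HG'.
  destruct HG as ((Hr&Hs&Ht)&_&_&PP&GQ&DG).
  simpl in Ch. destruct Ch as (aL1 & L1b & bL2 & L2c & cL3 & L3d & _).
  assert (Dg : forall L x pi, t L = Ln -> t x = Pt -> t pi = Pl -> I x L -> I L pi -> I x pi).
  { intros L x pi TL Tx Tp H1 H2. apply (DG L TL x pi); split; auto. }
  destruct (third HG' c L3 Pl) as (pi3 & Tp3 & cp3 & L3p3); try congruence; auto.
  assert (exists M pi2, t M = Ln /\ I M c /\ I M pi3 /\ t pi2 = Pl /\ I L2 pi2 /\ I M pi2 /\ I pi2 c)
    as (M & pi2 & TM & Mc & Mp3 & Tp2 & L2p2 & Mp2 & p2c).
  { destruct (classic (I L2 pi3)) as [Y|N].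
    - exists L2, pi3. repeat split; auto.
    - destruct (GQ c Tc) as (_ & A2 & _).
      destruct (A2 L2 pi3 (conj T2 L2c) (conj Tp3 (Hs _ _ cp3)) N)
        as (M & (TM & Mc) & Mp3 & (W & (TW & Wc) & L2W & MW) & _).
      exists M, W. repeat split; auto. }
  assert (bp2 : I b pi2) by (apply (Dg L2); auto).
  assert (exists N pi1, t N = Ln /\ I N b /\ I N pi2 /\ t pi1 = Pl /\ I L1 pi1 /\ I N pi1 /\ I pi1 b)
    as (N & pi1 & TN & Nb & Np2 & Tp1 & L1p1 & Np1 & p1b).
  { destruct (classic (I L1 pi2)) as [Y|Nn].
    - exists L1, pi2. repeat split; auto.
    - destruct (GQ b Tb) as (_ & A2 & _).
      destruct (A2 L1 pi2 (conj T1 L1b) (conj Tp2 (Hs _ _ bp2)) Nn)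
        as (N & (TN & Nb) & Np2 & (W & (TW & Wb) & L1W & NW) & _).
      exists N, W. repeat split; auto. }
  assert (exists e, t e = Pt /\ I e N /\ I e M /\ I e pi2) as (e & Te & eN & eM & ep2).
  { destruct (classic (N = M)) as [<-|NM].
    - exists b. auto.
    - destruct (PP pi2 Tp2) as (_ & A2 & _).
      destruct (A2 N M (conj TN Np2) (conj TM Mp2) NM) as (e & (Te & ep2) & eN & eM & _).
      exists e. auto. }
  assert (ap1 : I a pi1) by (apply (Dg L1); auto).
  assert (ep1 : I e pi1) by (apply (Dg N); auto).
  assert (ep3 : I e pi3) by (apply (Dg M); auto).
  assert (dp3 : I d pi3) by (apply (Dg L3); auto).
  destruct (join_in_plane HG' pi1 a e Tp1 Ta Te ap1 ep1) as (Xl & TX & aX & eX & Xp1).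
  destruct (join_in_plane HG' pi3 e d Tp3 Te Td ep3 dp3) as (Y & TY & eY & dY & Yp3).
  exists Xl, e, Y. split; [|split; [|split; [|split]]]; auto.
  - pth Hs Hr.
  - assert (Hc : homotopic I [c] [c; M; e; M; c]).
    { apply hsym. eapply htrans.
      - eapply (hmv1 [c] [c] M e); pth Hs Hr.
      - eapply (hmv1 [] [] c M); pth Hs Hr. }
    eapply htrans. apply (cong [a; L1; b; L2] [L3; d] Hc). pth Hs Hr.
    assert (H2 : homotopic I [b; L2; c; M; e] [b; N; e]).
    { apply (cone_eq Hs pi2); auto; try (inall; auto); pth Hs Hr. }
    eapply htrans. apply (cong [a; L1] [M; c; L3; d] H2). pth Hs Hr.
    assert (H3 : homotopic I [a; L1; b; N; e] [a; Xl; e]).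
    { apply (cone_eq Hs pi1); auto; try (inall; auto); pth Hs Hr. }
    eapply htrans. apply (cong [] [M; c; L3; d] H3). pth Hs Hr.
    assert (H4 : homotopic I [e; M; c; L3; d] [e; Y; d]).
    { apply (cone_eq Hs pi3); auto; try (inall; auto); pth Hs Hr. }
    apply (congL [a; Xl] H4). pth Hs Hr.
Qed.

Lemma invariant {X} {t : X -> ctype} {I : X -> X -> Prop} (HG : C3_geometry t I) p :
  t p = Pt -> forall l, chain I p l ->
  exists Xl e Y f, t Xl = Ln /\ t e = Pt /\ t Y = Ln /\ t f = Pt /\
    chain I p [Xl; e; Y; f; last l p] /\
    homotopic I (p :: l) [p; Xl; e; Y; f; last l p].
Proof.
  intros Tp. pose proof HG as HG'.
  destruct HG as ((Hr&Hs&Ht)&_).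
  induction l as [|w l IH] using rev_ind; intros Ch.
  - destruct (line_through HG' p Tp) as (K & TK & HK).
    exists K, p, K, p. split; [|split; [|split; [|split; [|split]]]]; auto.
    + pth Hs Hr.
    + simpl. eapply htrans.
      { apply hsym. eapply (hmv1 [] [] p p); pth Hs Hr. }
      eapply htrans.
      { eapply (hmv2 [] [] p p p); pth Hs Hr. }
      eapply htrans.
      { apply hsym. eapply (hmv1 [] [p] p K); pth Hs Hr. }
      apply hsym. eapply (hmv1 [p; K] [p] p K); pth Hs Hr.
  - apply chain_app in Ch. destruct Ch as (Ch & Cw & _).
    destruct (IH Ch) as (Xl & e & Y & f & TX & Te & TY & Tf & C1 & H1).
    set (v := last l p) in *.
    assert (Hfv : I f v) by (simpl in C1; tauto).
    destruct (stepA HG' f v w Tf Hfv Cw) as (K & f' & TK & Tf' & C2 & H2).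
    assert (C3 : chain I p [Xl; e; Y; f; K; f']).
    { simpl in C1, C2 |- *. tauto. }
    destruct (reduce3 HG' p Xl e Y f K f' Tp Te Tf Tf' TX TY TK C3)
      as (X' & e' & Y' & TX' & Te' & TY' & C4 & H3).
    rewrite last_last.
    exists X', e', Y', f'. split; [|split; [|split; [|split; [|split]]]]; auto.
    + simpl in C2, C4 |- *. tauto.
    + eapply htrans.
      { apply (cong [] [w] H1). simpl. apply chain_app. simpl. split; auto. }
      eapply htrans.
      { apply (congL [p; Xl; e; Y] H2). simpl in C1 |- *. tauto. }
      apply (cong [] [w] H3). simpl in C1, C2 |- *. tauto.
Qed.

Theorem mainTheorem6 (X : Type) (t : X -> ctype) (I : X -> X -> Prop)
  (HG : C3_geometry t I) (p : X) (l : list X) :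
  t p = Pt -> closed_path_at I p l ->
  exists l', primitive_path t I l' /\ homotopic I l l'.
Proof.
  intros Tp (Pl0 & Hd & Ll). pose proof HG as HG'.
  destruct HG as ((Hr&Hs&Ht)&_).
  destruct l as [|p0 l']; [discriminate|]. simpl in Hd. injection Hd as ->.
  rewrite last_cons_d in Ll. simpl in Pl0.
  destruct (invariant HG' p Tp l' Pl0) as (Xl & e & Y & f & TX & Te & TY & Tf & C1 & H1).
  rewrite Ll in C1, H1.
  assert (f = p) as ->.
  { apply Ht. simpl in C1; tauto. congruence. }
  exists [p; Xl; e; Y; p]. split.
  - exists p, Xl, e, Y. split; [reflexivity|]. repeat split; auto; simpl in C1 |- *; tauto.
  - eapply htrans. exact H1.
    simpl in C1. destruct C1 as (c1&c2&c3&c4&c5&_).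
    eapply (hmv2 [p; Xl; e] [] Y p p); pth Hs Hr.
Qed.
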